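(* Let $\hat\beta$ be the Exclusive Lasso estimate, let $\mathcal{E} = \left\{ i : \frac{|X_i^T (y - X\hat\beta)|}{\|\hat\beta_g\|_1} = \lambda \right\}$ (with $g$ the group containing $i$) be the weighted equicorrelation set, and let $\gamma'$ be the vector with entries $\gamma'_i = \|\hat\beta_g\|_1 - |\hat\beta_i|$ for $i \in \mathcal{E}$, $i \in g$. Then $$\hat\beta_{\mathcal{E}} = (X_{\mathcal{E}}^T X_{\mathcal{E}} + \lambda I)^{-1}\left[X_{\mathcal{E}}^T y - \lambda \gamma' s\right] \quad\text{and}\quad \hat\beta_{\mathcal{E}^c} = 0,$$ where $s \in \{-1,1\}^{|\mathcal{E}|}$ is a vector of signs that satisfies the optimality conditions, $\gamma' s$ denotes the elementwise product, and $\mathcal{E}^c$ is the complement of $\mathcal{E}$.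
   Context: Linear model $y = X\beta^* + \epsilon$ with $X \in \mathbb{R}^{n\times p}$, centered response, and a collection $\mathcal{G}$ of non-overlapping groups partitioning $\{1,\dots,p\}$. The Exclusive Lasso estimate is $\hat\beta = \arg\min_\beta \frac{1}{2}\|y - X\beta\|_2^2 + \lambda \frac{1}{2}\sum_{g\in\mathcal{G}} \|\beta_g\|_1^2$ with $\lambda>0$. Its optimality conditions are $-X^T(y - X\hat\beta) + \lambda z = 0$ with $z_i = \mathrm{sign}(\hat\beta_i)\|\hat\beta_g\|_1$ if $\hat\beta_i \neq 0$ and $z_i \in [-\|\hat\beta_g\|_1, \|\hat\beta_g\|_1]$ if $\hat\beta_i = 0$, for $i \in g$. *)

(* Defs.v *)
From HB Require Import structures.
From mathcomp Require Import all_boot all_order all_algebra.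
Set Implicit Arguments. Unset Strict Implicit. Unset Printing Implicit Defensive.
Import Order.TTheory GRing.Theory Num.Theory.
Local Open Scope ring_scope.

(* Groups: a partition of the p indices is given by a labelling
   grp : 'I_p -> 'I_k (index i lies in group grp i). *)

Definition el_gnorm (R : numDomainType) (p k : nat) (grp : 'I_p -> 'I_k)
  (beta : 'cV[R]_p) (i : 'I_p) : R :=
  \sum_(j < p | grp j == grp i) `|beta j 0|.

Definition gl1 (R : numDomainType) (p k : nat) (grp : 'I_p -> 'I_k)
  (beta : 'cV[R]_p) (g : 'I_k) : R :=
  \sum_(j < p | grp j == g) `|beta j 0|.

Definition sqnorm (R : numDomainType) (n : nat) (v : 'cV[R]_n) : R :=
  \sum_(i < n) (v i 0) ^+ 2.

Definition el_obj (R : realFieldType) (n p k : nat) (grp : 'I_p -> 'I_k)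
  (X : 'M[R]_(n, p)) (y : 'cV[R]_n) (lambda : R) (beta : 'cV[R]_p) : R :=
  2^-1 * sqnorm (y - X *m beta)
  + lambda * (2^-1 * \sum_(g < k) (gl1 grp beta g) ^+ 2).

Definition equicorr (R : realFieldType) (n p k : nat) (grp : 'I_p -> 'I_k)
  (X : 'M[R]_(n, p)) (y : 'cV[R]_n) (lambda : R) (beta : 'cV[R]_p)
  : {set 'I_p} :=
  [set i | `|(X^T *m (y - X *m beta)) i 0| / el_gnorm grp beta i == lambda].

(* Main.v *)
Require Import Defs.
From HB Require Import structures.
From mathcomp Require Import all_boot all_order all_algebra.
From mathcomp Require Import ring lra.
Import Order.TTheory GRing.Theory Num.Theory.
Local Open Scope ring_scope.

Lemma sqnorm_shift (R : realFieldType) (n : nat) (r c : 'cV[R]_n) (t : R) :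
  sqnorm (r - t *: c) = sqnorm r - 2 * t * (\sum_m r m 0 * c m 0) + t ^+ 2 * sqnorm c.
Proof.
rewrite /sqnorm mulr_sumr mulr_sumr -sumrB -big_split /=.
apply: eq_bigr => m _; rewrite !mxE; ring.
Qed.

Lemma sum_col (R : realFieldType) (n p : nat) (X : 'M[R]_(n, p)) (r : 'cV[R]_n) i :
  \sum_m r m 0 * (X *m (delta_mx i 0 : 'cV[R]_p)) m 0 = (X^T *m r) i 0.
Proof.
rewrite mxE; apply: eq_bigr => m _; rewrite -colE !mxE; ring.
Qed.

Lemma gl1_shift (R : realFieldType) (p k : nat) (grp : 'I_p -> 'I_k)
  (beta : 'cV[R]_p) (i : 'I_p) (t : R) g :
  gl1 grp (beta + t *: (delta_mx i 0 : 'cV[R]_p)) g =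
  gl1 grp beta g + (if grp i == g then `|beta i 0 + t| - `|beta i 0| else 0).
Proof.
rewrite /gl1; case: ifP => Hg.
  rewrite (bigD1 i) //= [in RHS](bigD1 i) //= !mxE eqxx /= mulr1.
  rewrite (eq_bigr (fun j => `|beta j 0|)); first ring.
  move=> j /andP[_ Hj].
  by rewrite !mxE (negbTE Hj) mulr0 addr0.
rewrite addr0; apply: eq_bigr => j Hj.
have Hji : j != i by apply/eqP => Eji; rewrite -Eji (eqP Hj) eqxx in Hg.
by rewrite !mxE (negbTE Hji) mulr0 addr0.
Qed.

Lemma sumsq_shift (R : realFieldType) (p k : nat) (grp : 'I_p -> 'I_k)
  (beta : 'cV[R]_p) (i : 'I_p) (t : R) :
  \sum_(g < k) (gl1 grp (beta + t *: (delta_mx i 0 : 'cV[R]_p)) g) ^+ 2 =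
  \sum_(g < k) (gl1 grp beta g) ^+ 2 +
   ((gl1 grp beta (grp i) + (`|beta i 0 + t| - `|beta i 0|)) ^+ 2 - (gl1 grp beta (grp i)) ^+ 2).
Proof.
rewrite (bigD1 (grp i)) //= [in RHS](bigD1 (grp i)) //= gl1_shift eqxx.
rewrite (eq_bigr (fun g => gl1 grp beta g ^+ 2)).
  ring.
move=> g Hg; rewrite gl1_shift eq_sym (negbTE Hg) addr0 //.
Qed.

Lemma quad0 (R : realFieldType) (a b d : R) : 0 < d -> 0 <= b ->
  (forall u, `|u| < d -> 0 <= u * a + u ^+ 2 * b) -> a = 0.
Proof.
move=> d0 b0 H; apply/eqP; apply/negP => /negP a0.
have na : 0 < `|a| by rewrite normr_gt0.
set D := 2 * (b * d + `|a|).
have D0 : 0 < D by rewrite /D; nra.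
set w := d / D.
have w0 : 0 < w by rewrite /w divr_gt0.
have wb : w * b < 1.
  rewrite /w mulrAC ltr_pdivrMr // mul1r /D; nra.
have wa : `|a| * w < d.
  rewrite /w mulrA ltr_pdivrMr //; rewrite /D; nra.
have := H (- a * w).
rewrite normrM normrN gtr0_norm // => /(_ wa).
have a2 : 0 < a ^+ 2 by rewrite lt_def sqr_ge0 andbT sqrf_eq0 a0.
have P : 0 < a ^+ 2 * w * (1 - w * b) by apply: mulr_gt0; [apply: mulr_gt0|rewrite subr_gt0].
have -> : - a * w * a + (- a * w) ^+ 2 * b = - (a ^+ 2 * w * (1 - w * b)) by ring.
rewrite oppr_ge0 => Q; have := lt_le_trans P Q; by rewrite ltxx.
Qed.

Lemma sg_facts (R : realFieldType) (x u : R) : x != 0 -> `|u| < `|x| ->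
  Num.sg x ^+ 2 = 1 /\ `|x + Num.sg x * u| = `|x| + u.
Proof.
move=> x0 /ltr_normlP [h1 h2].
case: (ltrgt0P x) x0 h1 h2 => [xp|xn|->]; rewrite ?eqxx //= => _ h1 h2.
- rewrite gtr0_sg //; split; first by rewrite expr1n.
  rewrite mul1r gtr0_norm; lra.
- rewrite ltr0_sg //; split; first by rewrite sqrrN expr1n.
  rewrite ltr0_norm; lra.
Qed.

Lemma stat (R : realFieldType) (n p k : nat) (grp : 'I_p -> 'I_k)
  (X : 'M[R]_(n, p)) (y : 'cV[R]_n) (lambda : R) (beta : 'cV[R]_p) :
  0 < lambda ->
  (forall b : 'cV[R]_p, el_obj grp X y lambda beta <= el_obj grp X y lambda b) ->
  forall i, beta i 0 != 0 ->
  (X^T *m (y - X *m beta)) i 0 = lambda * (Num.sg (beta i 0) * el_gnorm grp beta i).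
Proof.
move=> l0 Hmin i b0.
set s := Num.sg (beta i 0).
set A := (X^T *m (y - X *m beta)) i 0.
set G := el_gnorm grp beta i.
set d := (delta_mx i 0 : 'cV[R]_p).
set C := sqnorm (X *m d).
have key : forall u, `|u| < `|beta i 0| ->
    0 <= u * (lambda * G - s * A) + u ^+ 2 * ((C + lambda) / 2).
  move=> u Hu; have [s2 hab] := @sg_facts _ _ _ b0 Hu.
  have := Hmin (beta + (s * u) *: d).
  rewrite /el_obj sumsq_shift.
  have -> : y - X *m (beta + (s * u) *: d) = (y - X *m beta) - (s * u) *: (X *m d).
    by rewrite mulmxDr -scalemxAr opprD addrA.
  rewrite sqnorm_shift sum_col -/A hab.
  have -> : `|beta i 0| + u - `|beta i 0| = u by ring.
  rewrite exprMn s2 mul1r.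
  rewrite -/G.
  have -> : gl1 grp beta (grp i) = G by [].
  rewrite -/C => H; rewrite -subr_ge0 in H; apply: (le_trans H).
  rewrite le_eqVlt; apply/orP; left; apply/eqP; by field.
have dp : 0 < `|beta i 0| by rewrite normr_gt0.
have Cp : 0 <= (C + lambda) / 2.
  have C0 : 0 <= C by rewrite /C /sqnorm; apply: sumr_ge0 => m _; exact: sqr_ge0.
  apply: divr_ge0 => //; apply: addr_ge0 => //; exact: ltW.
have := @quad0 _ _ _ _ dp Cp key.
have s2 : s ^+ 2 = 1.
  rewrite /s; case: (ltrgt0P (beta i 0)) b0 => [h|h|->]; rewrite ?eqxx //= => _.
  - by rewrite (gtr0_sg h) expr1n.
  - by rewrite (ltr0_sg h) sqrrN expr1n.
move=> E; have -> : A = s ^+ 2 * A by rewrite s2 mul1r.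
move/eqP: E; rewrite subr_eq0 => /eqP E.
rewrite expr2 -mulrA -E; ring.
Qed.

Lemma gnorm_ge (R : realFieldType) (p k : nat) (grp : 'I_p -> 'I_k)
  (beta : 'cV[R]_p) (i : 'I_p) : `|beta i 0| <= el_gnorm grp beta i.
Proof.
rewrite /el_gnorm (bigD1 i) //= lerDl; apply: sumr_ge0 => j _; exact: normr_ge0.
Qed.

Lemma rv_sq (R : realFieldType) (m : nat) (w : 'rV[R]_m) :
  (w *m w^T) 0 0 = \sum_j w 0 j ^+ 2.
Proof. rewrite mxE; apply: eq_bigr => j _; by rewrite mxE expr2. Qed.

Lemma unit_gram (R : realFieldType) (n m : nat) (Y : 'M[R]_(n, m)) (l : R) :
  0 < l -> Y^T *m Y + l%:M \in unitmx.
Proof.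
move=> l0; rewrite -row_free_unit; apply: inj_row_free => v Hv.
have H0 : (v *m (Y^T *m Y + l%:M) *m v^T) 0 0 = 0 by rewrite Hv mul0mx mxE.
have E : v *m (Y^T *m Y + l%:M) *m v^T =
   (v *m Y^T) *m (v *m Y^T)^T + l *: (v *m v^T).
  by rewrite mulmxDr mul_mx_scalar mulmxDl -scalemxAl !mulmxA trmx_mul trmxK mulmxA.
move: H0; rewrite E mxE [in X in _ + X]mxE !rv_sq.
set S1 := \sum_j _; set S2 := \sum_j _.
have S1p : 0 <= S1 by apply: sumr_ge0 => j _; rewrite sqr_ge0.
have S2p : 0 <= S2 by apply: sumr_ge0 => j _; rewrite sqr_ge0.
move=> H.
have S20 : S2 = 0.
  apply/eqP; rewrite eq_le S2p andbT.
  have : l * S2 <= 0 by lra.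
  by rewrite pmulr_rle0.
apply/matrixP => a b; rewrite ord1 mxE.
have := psumr_eq0P _ S20 (i := b).
move=> /(_ (fun j _ => sqr_ge0 _) isT) /eqP; by rewrite sqrf_eq0 => /eqP.
Qed.

Lemma entryD (R : realFieldType) a b (M N : 'M[R]_(a, b)) i j : (M + N) i j = M i j + N i j.
Proof. by rewrite !mxE. Qed.
Lemma entryB (R : realFieldType) a b (M N : 'M[R]_(a, b)) i j : (M - N) i j = M i j - N i j.
Proof. by rewrite !mxE. Qed.
Lemma entryZ (R : realFieldType) a b (l : R) (M : 'M[R]_(a, b)) i j : (l *: M) i j = l * M i j.
Proof. by rewrite !mxE. Qed.

Theorem proposition2 (R : realFieldType) (n p k : nat) (grp : 'I_p -> 'I_k)
  (X : 'M[R]_(n, p)) (y : 'cV[R]_n) (lambda : R) (betahat : 'cV[R]_p) :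
  0 < lambda ->
  \sum_(i < n) y i 0 = 0 ->
  (forall beta : 'cV[R]_p,
      el_obj grp X y lambda betahat <= el_obj grp X y lambda beta) ->
  let E := equicorr grp X y lambda betahat in
  let XE : 'M[R]_(n, #|E|) := \matrix_(i < n, j < #|E|) X i (enum_val j) in
  let betaE : 'cV[R]_#|E| := \col_(j < #|E|) betahat (enum_val j) 0 in
  let gammaE : 'cV[R]_#|E| :=
    \col_(j < #|E|) (el_gnorm grp betahat (enum_val j) - `|betahat (enum_val j) 0|) in
  exists s : 'cV[R]_#|E|,
    (forall j, s j 0 = 1 \/ s j 0 = -1) /\
    (forall j, s j 0 * betahat (enum_val j) 0 = `|betahat (enum_val j) 0|) /\
    (forall j, (X^T *m (y - X *m betahat)) (enum_val j) 0
                 = lambda * (s j 0 * el_gnorm grp betahat (enum_val j))) /\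
    betaE = invmx (XE^T *m XE + lambda%:M)
              *m (XE^T *m y - lambda *: \col_(j < #|E|) (gammaE j 0 * s j 0)) /\
    (forall i, i \notin E -> betahat i 0 = 0).
Proof.
move=> l0 _ Hmin E XE betaE gammaE.
set A := X^T *m (y - X *m betahat).
have Gge0 : forall i, 0 <= el_gnorm grp betahat i.
  by move=> i; apply: sumr_ge0 => j _; exact: normr_ge0.
have HE : forall i, i \in E ->
    0 < el_gnorm grp betahat i /\ `|A i 0| = lambda * el_gnorm grp betahat i.
  move=> i; rewrite inE => /eqP H.
  have G0 : el_gnorm grp betahat i != 0.
    by apply/eqP => G0; move: H; rewrite G0 invr0 mulr0 => H; rewrite H ltxx in l0.
  split; first by rewrite lt_def G0 Gge0.
  by rewrite -H divfK.
have Hout : forall i, i \notin E -> betahat i 0 = 0.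
  move=> i Hi; apply/eqP; move: Hi; apply: contraR => b0.
  have St := @stat _ _ _ _ grp X y lambda betahat l0 Hmin i b0.
  have Gp : 0 < el_gnorm grp betahat i.
    by apply: (lt_le_trans _ (@gnorm_ge _ _ _ grp betahat i)); rewrite normr_gt0.
  rewrite /E inE -/A St !normrM normr_sg b0 mul1r (gtr0_norm l0) (gtr0_norm Gp).
  by rewrite mulfK ?eqxx // gt_eqF.
pose s : 'cV[R]_#|E| := \col_j Num.sg (A (enum_val j) 0).
have s1 : forall j, s j 0 = 1 \/ s j 0 = -1.
  move=> j; rewrite [s j 0]mxE; have [Gp HA] := HE _ (enum_valP j).
  case: (ltrgt0P (A (enum_val j) 0)) HA => [h|h|->] HA.
  - by left; rewrite gtr0_sg.
  - by right; rewrite ltr0_sg.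
  - by move: HA; rewrite ?normr0 => /esym/eqP; rewrite mulf_eq0 !gt_eqF.
have s2 : forall j, s j 0 * betahat (enum_val j) 0 = `|betahat (enum_val j) 0|.
  move=> j; rewrite [s j 0]mxE; have [Gp HA] := HE _ (enum_valP j).
  case: (eqVneq (betahat (enum_val j) 0) 0) => [->|b0]; first by rewrite mulr0 normr0.
  have St := @stat _ _ _ _ grp X y lambda betahat l0 Hmin _ b0.
  rewrite /A St sgrM sgr_smul (gtr0_sg l0) (gtr0_sg Gp) mul1r mulr1.
  by rewrite normrEsg.
have s3 : forall j, A (enum_val j) 0
    = lambda * (s j 0 * el_gnorm grp betahat (enum_val j)).
  move=> j; rewrite [s j 0]mxE; have [Gp HA] := HE _ (enum_valP j).
  by rewrite [LHS]numEsg HA mulrCA.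
exists s; split; first exact: s1.
split; first exact: s2.
split; first exact: s3.
split; last exact: Hout.
have U := @unit_gram _ _ _ XE lambda l0.
suff H : (XE^T *m XE + lambda%:M) *m betaE =
   XE^T *m y - lambda *: \col_(j < #|E|) (gammaE j 0 * s j 0).
  by rewrite -H mulKmx.
have XEb : XE *m betaE = X *m betahat.
  apply/matrixP => m c; rewrite ord1 !mxE.
  rewrite (eq_bigr (fun j => X m (enum_val j) * betahat (enum_val j) 0)); last first.
    by move=> j _; rewrite !mxE.
  rewrite -(@big_enum_val _ _ _ _ (mem E) (fun i => X m i * betahat i 0)).
  rewrite [RHS](bigID (fun i => i \in E)) /= [X in _ = _ + X]big1 ?addr0 //.
  by move=> i /Hout ->; rewrite mulr0.
have XEtv : forall v : 'cV[R]_n, forall j, (XE^T *m v) j 0 = (X^T *m v) (enum_val j) 0.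
  by move=> v j; rewrite !mxE; apply: eq_bigr => m _; rewrite !mxE.
rewrite mulmxDl -mulmxA XEb mul_scalar_mx.
apply/matrixP => j c; rewrite ord1 entryD entryB !entryZ !XEtv.
have eA : A (enum_val j) 0 = (X^T *m y) (enum_val j) 0 - (X^T *m (X *m betahat)) (enum_val j) 0.
  by rewrite /A mulmxBr entryB.
have -> : (\col_(j0 < #|E|) (gammaE j0 0 * s j0 0)) j 0 = gammaE j 0 * s j 0.
  by rewrite [LHS]mxE.
move: eA (s3 j) (s2 j) (s1 j).
move: ((X^T *m y) (enum_val j) 0) => Yj.
move: ((X^T *m (X *m betahat)) (enum_val j) 0) => Zj.
move: (A (enum_val j) 0) => Aj.
move: (s j 0) => sj.
rewrite !mxE.
move=> eA e3 e2 [e1|e1]; rewrite -e2 e1 in e3 *;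
  (have -> : Yj = Aj + Zj by rewrite eA; ring); rewrite e3; ring.
Qed.
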